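(* Let $n,d,k\in\mathbb{N}$ with $d\ge16k\ge32$, and set $\beta=1+\frac12\log\big(\frac{d}{16k}\big)$. Let $P^1,\dots,P^d$ be independent draws from $\mathsf{Beta}(\beta,\beta)$ and let $X\in(\{0,1\}^d)^n$ have entries $X_i^j$ independent conditioned on $P$ with $\mathbb{E}[X_i^j\mid P]=P^j$. Let $M:(\{0,1\}^d)^n\to\{0,1\}^d$ be $(1,1/(8nd))$-differentially private. Suppose that for every $j\in[d]$, conditioned on $P$ (probabilities over $X$ and the randomness of $M$): (1) if $P^j\le\frac78-\frac3{16}$ then $\Pr[M(X)^j=1]\le\frac{k}{16d}$; (2) if $P^j\ge\frac78$ then $\Pr[M(X)^j=1]\ge1-\frac1{16}$. Then $n\ge\frac1{16}\sqrt{k}\,\log\big(\frac{d}{16k}\big)$.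
   Context: A dataset $x\in(\{0,1\}^d)^n$ is an $n\times d$ matrix with rows $x_i$; two datasets are neighbors if they differ in at most one row. A randomized algorithm $M$ is $(\varepsilon,\delta)$-differentially private if for all neighboring $x,x'$ and all sets $R$ of outputs, $\Pr[M(x)\in R]\le e^\varepsilon\Pr[M(x')\in R]+\delta$. $\mathsf{Beta}(\alpha,\beta)$ has density proportional to $p^{\alpha-1}(1-p)^{\beta-1}$ on $[0,1]$. $\log$ is the natural logarithm. *)

(* Defs.v *)
From Stdlib Require Import Reals.
From mathcomp Require Import all_boot.
Set Implicit Arguments. Unset Strict Implicit. Unset Printing Implicit Defensive.

Open Scope R_scope.

Definition row (d : nat) := {ffun 'I_d -> bool}.
Definition dataset (n d : nat) := {ffun 'I_n -> row d}.

(* A randomized algorithm M : ({0,1}^d)^n -> {0,1}^d, represented by its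
   output distribution: M x o = Pr[M(x) = o]. *)
Definition mech (n d : nat) := dataset n d -> row d -> R.

Definition is_mech (n d : nat) (M : mech n d) : Prop :=
  forall x : dataset n d,
    (forall o, 0 <= M x o) /\ \big[Rplus/0]_(o : row d) M x o = 1.

Definition prob_out (n d : nat) (M : mech n d) (x : dataset n d)
  (S : pred (row d)) : R :=
  \big[Rplus/0]_(o : row d | S o) M x o.

Definition neighbors (n d : nat) (x x' : dataset n d) : Prop :=
  exists i : 'I_n, forall i' : 'I_n, i' <> i -> x i' = x' i'.

Definition diff_private (n d : nat) (eps delta : R) (M : mech n d) : Prop :=
  forall x x' : dataset n d, neighbors x x' ->
    forall S : pred (row d),
      prob_out M x S <= exp eps * prob_out M x' S + delta.

(* Conditional on P = p, the entries X_i^j are independent Bernoulli(p^j):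
   probability of the dataset x. *)
Definition bern_weight (n d : nat) (p : 'I_d -> R) (x : dataset n d) : R :=
  \big[Rmult/1]_(i : 'I_n) \big[Rmult/1]_(j : 'I_d)
     (if x i j then p j else 1 - p j).

(* Pr[M(X)^j = 1 | P = p], over X and the coins of M. *)
Definition cond_prob_coord (n d : nat) (M : mech n d) (p : 'I_d -> R)
  (j : 'I_d) : R :=
  \big[Rplus/0]_(x : dataset n d)
     (bern_weight p x * prob_out M x (fun o : row d => o j)).

Definition beta_param (d k : nat) : R :=
  1 + / 2 * ln (INR d / (16 * INR k)).

(* Main.v *)
Require Import Defs.
From Stdlib Require Import Reals Lra.
From mathcomp Require Import all_boot.
From HB Require Import structures.
From Coquelicot Require Import Coquelicot.
Open Scope R_scope.
Set Implicit Arguments. Unset Strict Implicit. Unset Printing Implicit Defensive.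
Set Warnings "-notation-overridden -redundant-canonical-projection -ambiguous-paths".
Lemma RplusA : associative Rplus. Proof. move=> a b c; ring. Qed.
Lemma RmultA : associative Rmult. Proof. move=> a b c; ring. Qed.
HB.instance Definition _ := Monoid.isComLaw.Build R 0 Rplus RplusA Rplus_comm Rplus_0_l.
HB.instance Definition _ := Monoid.isComLaw.Build R 1 Rmult RmultA Rmult_comm Rmult_1_l.
HB.instance Definition _ := Monoid.isMulLaw.Build R 0 Rmult Rmult_0_l Rmult_0_r.
HB.instance Definition _ := Monoid.isAddLaw.Build R Rmult Rplus Rmult_plus_distr_r Rmult_plus_distr_l.

Definition b2R (b : bool) : R := if b then 1 else 0.
Definition rw (d : nat) (p : 'I_d -> R) (r : row d) : R :=
  \big[Rmult/1]_(j < d) (if r j then p j else 1 - p j).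

Lemma bern_rw n d (p : 'I_d -> R) (x : dataset n d) :
  bern_weight p x = \big[Rmult/1]_(i < n) rw p (x i).
Proof. by []. Qed.

Lemma prod_pred1 (d : nat) (j : 'I_d) (h : 'I_d -> R) :
  \big[Rmult/1]_(m < d) (if m == j then h m else 1) = h j.
Proof.
rewrite (bigD1 j) //= eqxx big1 ?Rmult_1_r // => m /negbTE ->; by [].
Qed.

Lemma sum_rw d (p : 'I_d -> R) : \big[Rplus/0]_(r : row d) rw p r = 1.
Proof.
rewrite /rw -(bigA_distr_bigA (fun j (b : bool) => if b then p j else 1 - p j)).
rewrite big1 // => j _. rewrite big_bool /=. ring.
Qed.

Lemma sum_bern n d (p : 'I_d -> R) : \big[Rplus/0]_(x : dataset n d) bern_weight p x = 1.
Proof.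
rewrite /bern_weight.
rewrite -(bigA_distr_bigA (fun (i : 'I_n) (r : row d) => rw p r)) /=.
by rewrite big1 // => i _; apply: sum_rw.
Qed.

Lemma prod_ge0 (I : Type) (s : seq I) (P : pred I) (F : I -> R) :
  (forall i, P i -> 0 <= F i) -> 0 <= \big[Rmult/1]_(i <- s | P i) F i.
Proof.
move=> H; apply: (big_ind (fun x => 0 <= x)); [lra| |by []].
move=> a b ha hb; exact: Rmult_le_pos.
Qed.

Lemma sum_ge0 (I : Type) (s : seq I) (P : pred I) (F : I -> R) :
  (forall i, P i -> 0 <= F i) -> 0 <= \big[Rplus/0]_(i <- s | P i) F i.
Proof.
move=> H; apply: (big_ind (fun x => 0 <= x)); [lra| |by []].
move=> a b ha hb; lra.
Qed.

Lemma rw_ge0 d (p : 'I_d -> R) r : (forall j, 0 <= p j <= 1) -> 0 <= rw p r.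
Proof. move=> hp; apply: prod_ge0 => j _; case: (r j); have := hp j; lra. Qed.

Lemma bern_ge0 n d (p : 'I_d -> R) (x : dataset n d) :
  (forall j, 0 <= p j <= 1) -> 0 <= bern_weight p x.
Proof. move=> hp; apply: prod_ge0 => i _; exact: rw_ge0. Qed.

Lemma sum_rw_cov d (p : 'I_d -> R) (j l : 'I_d) :
  \big[Rplus/0]_(r : row d) (rw p r * (b2R (r j) - p j) * (b2R (r l) - p l)) =
  if j == l then p j * (1 - p j) else 0.
Proof.
pose g (m : 'I_d) (b : bool) := (if b then p m else 1 - p m) *
  (if m == j then b2R b - p m else 1) * (if m == l then b2R b - p m else 1).
transitivity (\big[Rplus/0]_(r : row d) \big[Rmult/1]_(m < d) g m (r m)).
  apply: eq_bigr => r _; rewrite /g !big_split /= /rw.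
  by rewrite (prod_pred1 j (fun m => b2R (r m) - p m)) (prod_pred1 l (fun m => b2R (r m) - p m)).
rewrite -(bigA_distr_bigA g) /=.
have gs : forall m, \big[Rplus/0]_(b : bool) g m b =
   if m == j then (if m == l then p m * (1 - p m) else 0) else (if m == l then 0 else 1).
  move=> m; rewrite big_bool /g /b2R.
  case: (m == j); case: (m == l); rewrite /=; ring.
under eq_bigr do rewrite gs.
case: (eqVneq j l) => [<-|njl].
  rewrite (bigD1 j) //= !eqxx big1 ?Rmult_1_r // => m /negbTE ->; by [].
rewrite (bigD1 j) //= eqxx (negbTE njl) Rmult_0_l //.
Qed.

Lemma sum_le (I : Type) (s : seq I) (P : pred I) (F G : I -> R) :
  (forall i, P i -> F i <= G i) ->
  \big[Rplus/0]_(i <- s | P i) F i <= \big[Rplus/0]_(i <- s | P i) G i.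
Proof.
move=> H; apply: (big_ind2 (fun x y => x <= y)); [lra| |by []].
move=> a b c e h1 h2; lra.
Qed.

Lemma sum_scal (I : Type) (s : seq I) (P : pred I) (F : I -> R) c :
  \big[Rplus/0]_(i <- s | P i) (c * F i) = c * \big[Rplus/0]_(i <- s | P i) F i.
Proof. by rewrite big_distrr. Qed.

Lemma sum_plus (I : Type) (s : seq I) (P : pred I) (F G : I -> R) :
  \big[Rplus/0]_(i <- s | P i) (F i + G i) =
  \big[Rplus/0]_(i <- s | P i) F i + \big[Rplus/0]_(i <- s | P i) G i.
Proof. by rewrite big_split. Qed.

Lemma sum_opp (I : Type) (s : seq I) (P : pred I) (F : I -> R) :
  \big[Rplus/0]_(i <- s | P i) (- F i) = - \big[Rplus/0]_(i <- s | P i) F i.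
Proof.
apply: (big_ind2 (fun x y => x = - y)); [ring| |by []].
move=> a b c e -> ->; ring.
Qed.

Lemma sum_minus (I : Type) (s : seq I) (P : pred I) (F G : I -> R) :
  \big[Rplus/0]_(i <- s | P i) (F i - G i) =
  \big[Rplus/0]_(i <- s | P i) F i - \big[Rplus/0]_(i <- s | P i) G i.
Proof. rewrite /Rminus sum_plus sum_opp //. Qed.

Lemma dp_nonneg n d (M : mech n d) delta (x x' : dataset n d) (g : row d -> R) B :
  diff_private 1 delta M -> neighbors x x' -> (forall o, 0 <= g o <= B) ->
  \big[Rplus/0]_(o : row d) (M x o * g o) <=
  exp 1 * \big[Rplus/0]_(o : row d) (M x' o * g o) + delta * B.
Proof.
move=> dp nb hg.
have hB : 0 <= B by have := hg [ffun => false]; lra.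
pose S := (fun o : row d => if Rlt_dec (exp 1 * M x' o) (M x o) then true else false).
have hS := dp x x' nb S. rewrite /prob_out in hS.
have e1 : \big[Rplus/0]_(o : row d) (M x o * g o) =
   \big[Rplus/0]_(o : row d) ((M x o - exp 1 * M x' o) * g o) +
   exp 1 * \big[Rplus/0]_(o : row d) (M x' o * g o).
  rewrite -sum_scal -sum_plus; apply: eq_bigr => o _; ring.
rewrite e1.
have hsp : \big[Rplus/0]_(o : row d) ((M x o - exp 1 * M x' o) * g o) =
  \big[Rplus/0]_(o : row d | S o) ((M x o - exp 1 * M x' o) * g o) +
  \big[Rplus/0]_(o : row d | ~~ S o) ((M x o - exp 1 * M x' o) * g o).
  by rewrite (bigID S).
have h2 : \big[Rplus/0]_(o : row d | ~~ S o) ((M x o - exp 1 * M x' o) * g o) <= 0.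
  apply: (Rle_trans _ (\big[Rplus/0]_(o : row d | ~~ S o) 0)); last by rewrite big1 //; lra.
  apply: sum_le => o; rewrite /S; case: Rlt_dec => // H _.
  have : M x o <= exp 1 * M x' o by apply: Rnot_lt_le.
  have := hg o. nra.
have h1 : \big[Rplus/0]_(o : row d | S o) ((M x o - exp 1 * M x' o) * g o) <=
          \big[Rplus/0]_(o : row d | S o) ((M x o - exp 1 * M x' o) * B).
  apply: sum_le => o; rewrite /S; case: Rlt_dec => // H _.
  have := hg o. nra.
have h3e : \big[Rplus/0]_(o : row d | S o) ((M x o - exp 1 * M x' o) * B) =
   B * (\big[Rplus/0]_(o : row d | S o) M x o - exp 1 * \big[Rplus/0]_(o : row d | S o) M x' o).
  under eq_bigr do rewrite Rmult_comm.
  by rewrite sum_scal sum_minus sum_scal.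
have hS' : \big[Rplus/0]_(o : row d | S o) M x o <= exp 1 * \big[Rplus/0]_(o : row d | S o) M x' o + delta := hS.
have h3 : B * (\big[Rplus/0]_(o : row d | S o) M x o - exp 1 * \big[Rplus/0]_(o : row d | S o) M x' o) <= B * delta.
  apply: Rmult_le_compat_l => //; lra.
lra.
Qed.

Lemma sum_const_R (n : nat) (c : R) : \big[Rplus/0]_(i < n) c = INR n * c.
Proof.
elim: n => [|n IH]; first by rewrite big_ord0 /=; ring.
rewrite S_INR big_ord_recr /= IH; ring.
Qed.

Definition Yf d (p : 'I_d -> R) (o r : row d) : R :=
  \big[Rplus/0]_(j < d) (b2R (o j) * (b2R (r j) - p j)).
Definition upd n d (x : dataset n d) (i : 'I_n) (z : row d) : dataset n d :=
  [ffun i' => if i' == i then z else x i'].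

Lemma upd_weight n d (p : 'I_d -> R) (x : dataset n d) i z :
  bern_weight p x * rw p z = bern_weight p (upd x i z) * rw p (x i).
Proof.
rewrite !bern_rw (bigD1 i) //= [in RHS](bigD1 i) //= /upd ffunE eqxx.
have -> : \big[Rmult/1]_(j < n | j != i) rw p ([ffun i' => if i' == i then z else x i'] j) =
          \big[Rmult/1]_(j < n | j != i) rw p (x j).
  by apply: eq_bigr => j /negbTE hj; rewrite ffunE hj.
set A := \big[Rmult/1]_(j < n | j != i) rw p (x j). ring.
Qed.

Lemma upd_reindex n d (i : 'I_n) (F : dataset n d -> row d -> R) :
  \big[Rplus/0]_(x : dataset n d) \big[Rplus/0]_(z : row d) F (upd x i z) (x i) =
  \big[Rplus/0]_(x : dataset n d) \big[Rplus/0]_(z : row d) F x z.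
Proof.
rewrite !pair_bigA /=.
pose sg := fun u : dataset n d * row d => (upd u.1 i u.2, u.1 i).
have sgK : cancel sg sg.
  move=> [x z]; rewrite /sg /= /upd ffunE eqxx; congr (_, _).
  apply/ffunP => i'; rewrite !ffunE; case: eqP => [->|] //.
rewrite [in RHS](reindex_inj (can_inj sgK)) /=.
by [].
Qed.

Lemma Yf_bound d (p : 'I_d -> R) o r : (forall j, 0 <= p j <= 1) ->
  Rabs (Yf p o r) <= INR d.
Proof.
move=> hp; rewrite /Yf.
apply: (Rle_trans _ (\big[Rplus/0]_(j < d) 1)); last by rewrite sum_const_R; lra.
apply: (big_ind2 (fun a b => Rabs a <= b)).
- rewrite Rabs_R0; lra.
- move=> a b c e h1 h2; apply: (Rle_trans _ _ _ (Rabs_triang _ _)); lra.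
- move=> j _; have := hp j; rewrite /b2R; case: (o j); case: (r j);
  move=> h; apply Rabs_le; lra.
Qed.

Lemma sum_Y2 d (p : 'I_d -> R) (o : row d) :
  \big[Rplus/0]_(r : row d) (rw p r * (Yf p o r * Yf p o r)) =
  \big[Rplus/0]_(j < d) (b2R (o j) * b2R (o j) * (p j * (1 - p j))).
Proof.
rewrite /Yf.
transitivity (\big[Rplus/0]_(r : row d) \big[Rplus/0]_(j < d) \big[Rplus/0]_(l < d)
   (b2R (o j) * b2R (o l) * (rw p r * (b2R (r j) - p j) * (b2R (r l) - p l)))).
  apply: eq_bigr => r _; rewrite big_distrl /= -sum_scal; apply: eq_bigr => j _.
  rewrite big_distrr /= -sum_scal; apply: eq_bigr => l _; ring.
rewrite exchange_big /=; apply: eq_bigr => j _.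
rewrite exchange_big /=.
under eq_bigr do rewrite sum_scal sum_rw_cov.
rewrite (bigD1 j) //= eqxx big1 ?Rplus_0_r // => l /negbTE.
by rewrite eq_sym => ->; rewrite Rmult_0_r.
Qed.

Lemma sum_sum_weight n d (p : 'I_d -> R) :
  \big[Rplus/0]_(x : dataset n d) \big[Rplus/0]_(z : row d) (bern_weight p x * rw p z) = 1.
Proof.
under eq_bigr do rewrite sum_scal sum_rw Rmult_1_r.
exact: sum_bern.
Qed.

Lemma Yp_bound d (p : 'I_d -> R) (o : row d) lam : 0 < lam ->
  (forall j, 0 <= p j <= 1) ->
  \big[Rplus/0]_(r : row d) (rw p r * Rmax (Yf p o r) 0) <=
  (\big[Rplus/0]_(j < d) b2R (o j) / (4 * lam) + lam) / 2.
Proof.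
move=> hl hp.
apply: (Rle_trans _ (\big[Rplus/0]_(r : row d) (rw p r * ((Yf p o r * Yf p o r) / lam + lam) / 2))).
  apply: sum_le => r _.
  have hw := rw_ge0 r hp.
  set y := Yf p o r.
  have : Rmax y 0 <= (y * y / lam + lam) / 2.
    have h2 : 0 <= (Rabs y - lam) * (Rabs y - lam) by apply: Rle_0_sqr.
    have h3 : Rabs y * Rabs y = y * y by rewrite -Rabs_mult Rabs_pos_eq //; apply: Rle_0_sqr.
    have h4 : Rmax y 0 <= Rabs y by apply: Rmax_lub; [apply: Rle_abs| apply: Rabs_pos].
    have : Rabs y <= (y * y / lam + lam) / 2.
      apply: (Rmult_le_reg_l (2 * lam)); first lra.
      field_simplify; last lra. nra.
    lra.
  move=> h; have := Rmult_le_compat_l _ _ _ hw h. lra.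
have e1 : \big[Rplus/0]_(r : row d) (rw p r * ((Yf p o r * Yf p o r) / lam + lam) / 2) =
  (\big[Rplus/0]_(r : row d) (rw p r * (Yf p o r * Yf p o r)) / lam + lam) / 2.
  transitivity (\big[Rplus/0]_(r : row d) ((/ lam / 2) * (rw p r * (Yf p o r * Yf p o r)) + (lam / 2) * rw p r)).
    apply: eq_bigr => r _; field; lra.
  rewrite sum_plus !sum_scal sum_rw.
  set A := \big[Rplus/0]_(r : row d) (rw p r * (Yf p o r * Yf p o r)). field; lra.
rewrite e1 sum_Y2.
set A := \big[Rplus/0]_(j < d) (b2R (o j) * b2R (o j) * (p j * (1 - p j))).
set B := \big[Rplus/0]_(j < d) b2R (o j).
have hA : A <= / 4 * B.
  rewrite /B -sum_scal; apply: sum_le => j _.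
  have := hp j; have := Rle_0_sqr (p j - /2); rewrite /Rsqr /b2R; case: (o j) => /= h1 h; nra.
have hi : 0 <= / lam by apply: Rlt_le; apply: Rinv_0_lt_compat.
have : A / lam <= / 4 * B / lam by apply: Rmult_le_compat_r.
have -> : B / (4 * lam) = / 4 * B / lam by field; lra.
lra.
Qed.

Lemma per_row n d (M : mech n d) delta (p : 'I_d -> R) (i : 'I_n) lam :
  is_mech M -> diff_private 1 delta M -> (forall j, 0 <= p j <= 1) -> 0 < lam ->
  \big[Rplus/0]_(x : dataset n d) (bern_weight p x * \big[Rplus/0]_(o : row d) (M x o * Yf p o (x i))) <=
  exp 1 * ((\big[Rplus/0]_(x : dataset n d) (bern_weight p x *
              \big[Rplus/0]_(o : row d) (M x o * \big[Rplus/0]_(j < d) b2R (o j)))) / (4 * lam) + lam) / 2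
  + delta * INR d.
Proof.
move=> hM dp hp hl.
pose Yp := fun o r => Rmax (Yf p o r) 0.
pose Phi := fun (x : dataset n d) (r : row d) => \big[Rplus/0]_(o : row d) (M x o * Yp o r).
have s1 : \big[Rplus/0]_(x : dataset n d) (bern_weight p x * \big[Rplus/0]_(o : row d) (M x o * Yf p o (x i))) <=
   \big[Rplus/0]_(x : dataset n d) \big[Rplus/0]_(z : row d)
      (bern_weight p x * rw p z * (exp 1 * Phi (upd x i z) (x i) + delta * INR d)).
  apply: sum_le => x _.
  rewrite -[X in X <= _]Rmult_1_r -[X in _ * X <= _](sum_rw p) -sum_scal.
  apply: sum_le => z _.
  have hw : 0 <= bern_weight p x * rw p z by apply: Rmult_le_pos; [apply: bern_ge0|apply: rw_ge0].
  have h1 : \big[Rplus/0]_(o : row d) (M x o * Yf p o (x i)) <= Phi x (x i).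
    apply: sum_le => o _; have := (proj1 (hM x)) o; rewrite /Yp.
    have := Rmax_l (Yf p o (x i)) 0. nra.
  have h2 : Phi x (x i) <= exp 1 * Phi (upd x i z) (x i) + delta * INR d.
    apply: dp_nonneg => //.
      exists i => i' hi'; rewrite /upd ffunE; case: eqP => //.
    move=> o; split; first by apply: Rmax_r.
    apply: Rmax_lub; last by apply: pos_INR.
    apply: (Rle_trans _ _ _ (Rle_abs _)); exact: Yf_bound.
  have := Rmult_le_compat_l _ _ _ hw (Rle_trans _ _ _ h1 h2).
  set a := bern_weight p x; set b := rw p z; set c := \big[Rplus/0]_(o : row d) (M x o * Yf p o (x i)).
  move=> h; have : a * c * b = a * b * c by ring. move=> ->; exact: h.
have s2 : \big[Rplus/0]_(x : dataset n d) \big[Rplus/0]_(z : row d)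
      (bern_weight p x * rw p z * (exp 1 * Phi (upd x i z) (x i) + delta * INR d)) =
   exp 1 * \big[Rplus/0]_(x : dataset n d) \big[Rplus/0]_(z : row d)
      (bern_weight p x * rw p z * Phi x z) + delta * INR d.
  transitivity (exp 1 * \big[Rplus/0]_(x : dataset n d) \big[Rplus/0]_(z : row d)
      (bern_weight p x * rw p z * Phi (upd x i z) (x i)) +
      delta * INR d * \big[Rplus/0]_(x : dataset n d) \big[Rplus/0]_(z : row d) (bern_weight p x * rw p z)).
    rewrite -!sum_scal -sum_plus; apply: eq_bigr => x _.
    rewrite -!sum_scal -sum_plus; apply: eq_bigr => z _; ring.
  rewrite sum_sum_weight Rmult_1_r; congr (_ * _ + _).
  rewrite -(upd_reindex i (fun x z => bern_weight p x * rw p z * Phi x z)).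
  apply: eq_bigr => x _; apply: eq_bigr => z _.
  by rewrite (upd_weight p x i z).
have s3 : \big[Rplus/0]_(x : dataset n d) \big[Rplus/0]_(z : row d) (bern_weight p x * rw p z * Phi x z) <=
   ((\big[Rplus/0]_(x : dataset n d) (bern_weight p x *
              \big[Rplus/0]_(o : row d) (M x o * \big[Rplus/0]_(j < d) b2R (o j)))) / (4 * lam) + lam) / 2.
  transitivity (\big[Rplus/0]_(x : dataset n d) (bern_weight p x * \big[Rplus/0]_(o : row d)
      (M x o * ((\big[Rplus/0]_(j < d) b2R (o j)) / (4 * lam) + lam) / 2))).
    apply: (Rle_trans _ (\big[Rplus/0]_(x : dataset n d) (bern_weight p x * \big[Rplus/0]_(o : row d)
      (M x o * \big[Rplus/0]_(z : row d) (rw p z * Yp o z))))).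
      apply: Req_le; apply: eq_bigr => x _.
      transitivity (\big[Rplus/0]_(z : row d) \big[Rplus/0]_(o : row d)
          (bern_weight p x * (M x o * (rw p z * Yp o z)))).
        apply: eq_bigr => z _; rewrite /Phi big_distrr /=; apply: eq_bigr => o _; ring.
      rewrite exchange_big /= -sum_scal; apply: eq_bigr => o _.
      by rewrite -!sum_scal.
    apply: sum_le => x _; apply: Rmult_le_compat_l; first exact: bern_ge0.
    apply: sum_le => o _.
    have hm := (proj1 (hM x)) o.
    have := Yp_bound o hl hp.
    move=> h; apply: (Rle_trans _ _ _ (Rmult_le_compat_l _ _ _ hm h)); apply: Req_le; rewrite /Rdiv; ring.
  apply: Req_le.
  transitivity (\big[Rplus/0]_(x : dataset n d) (bern_weight p x * (
     / (8 * lam) * \big[Rplus/0]_(o : row d) (M x o * \big[Rplus/0]_(j < d) b2R (o j)) +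
     lam / 2 * \big[Rplus/0]_(o : row d) M x o))).
    apply: eq_bigr => x _; congr (_ * _).
    rewrite -!sum_scal -sum_plus; apply: eq_bigr => o _; field; lra.
  under eq_bigr do rewrite (proj2 (hM _)) Rmult_1_r Rmult_plus_distr_l (Rmult_comm _ (lam / 2)).
  rewrite sum_plus sum_scal sum_bern.
  set A := \big[Rplus/0]_(x : dataset n d) (bern_weight p x * (/ (8 * lam) * \big[Rplus/0]_(o : row d) (M x o * \big[Rplus/0]_(j < d) b2R (o j)))).
  set B := \big[Rplus/0]_(x : dataset n d) (bern_weight p x * \big[Rplus/0]_(o : row d) (M x o * \big[Rplus/0]_(j < d) b2R (o j))).
  have -> : A = / (8 * lam) * B.
    rewrite /A /B -sum_scal; apply: eq_bigr => x _; ring.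
  field; lra.
have he : 0 <= exp 1 by apply: Rlt_le; apply: exp_pos.
have := Rmult_le_compat_l _ _ _ he s3.
rewrite s2 in s1. lra.
Qed.

Lemma pout n d (M : mech n d) x (j : 'I_d) :
  prob_out M x (fun o : row d => o j) = \big[Rplus/0]_(o : row d) (M x o * b2R (o j)).
Proof.
rewrite /prob_out big_mkcond /=; apply: eq_bigr => o _; rewrite /b2R; case: (o j) => /=; ring.
Qed.

Definition cj n d (M : mech n d) (p : 'I_d -> R) (j : 'I_d) : R :=
  \big[Rplus/0]_(x : dataset n d) (bern_weight p x * prob_out M x (fun o : row d => o j) *
     \big[Rplus/0]_(i < n) (b2R (x i j) - p j)).

Lemma cj_sum n d (M : mech n d) (p : 'I_d -> R) :
  \big[Rplus/0]_(j < d) cj M p j =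
  \big[Rplus/0]_(i < n) \big[Rplus/0]_(x : dataset n d)
     (bern_weight p x * \big[Rplus/0]_(o : row d) (M x o * Yf p o (x i))).
Proof.
pose T := fun (x : dataset n d) (o : row d) (i : 'I_n) (j : 'I_d) =>
  bern_weight p x * (M x o * (b2R (o j) * (b2R (x i j) - p j))).
transitivity (\big[Rplus/0]_(x : dataset n d) \big[Rplus/0]_(o : row d)
   \big[Rplus/0]_(i < n) \big[Rplus/0]_(j < d) T x o i j).
  rewrite /cj.
  transitivity (\big[Rplus/0]_(j < d) \big[Rplus/0]_(x : dataset n d) \big[Rplus/0]_(o : row d)
     \big[Rplus/0]_(i < n) T x o i j).
    apply: eq_bigr => j _; apply: eq_bigr => x _; rewrite pout (big_distrr (bern_weight p x)) /=.
    rewrite big_distrl /=; apply: eq_bigr => o _; rewrite big_distrr /=.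
    apply: eq_bigr => i _; rewrite /T; ring.
  rewrite exchange_big /=; apply: eq_bigr => x _.
  rewrite exchange_big /=; apply: eq_bigr => o _.
  by rewrite exchange_big.
symmetry.
rewrite exchange_big /=; apply: eq_bigr => x _.
transitivity (\big[Rplus/0]_(i < n) \big[Rplus/0]_(o : row d) \big[Rplus/0]_(j < d) T x o i j).
  apply: eq_bigr => i _; rewrite big_distrr /=; apply: eq_bigr => o _.
  rewrite /Yf big_distrr /= big_distrr /=; apply: eq_bigr => j _; rewrite /T; ring.
by rewrite exchange_big.
Qed.

Lemma G_sum n d (M : mech n d) (p : 'I_d -> R) :
  \big[Rplus/0]_(j < d) cond_prob_coord M p j =
  \big[Rplus/0]_(x : dataset n d)
     (bern_weight p x * \big[Rplus/0]_(o : row d) (M x o * \big[Rplus/0]_(j < d) b2R (o j))).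
Proof.
rewrite /cond_prob_coord exchange_big /=; apply: eq_bigr => x _.
under eq_bigr do rewrite pout.
rewrite sum_scal; congr (_ * _).
rewrite exchange_big /=; apply: eq_bigr => o _; by rewrite big_distrr.
Qed.

Lemma dp_bound n d (M : mech n d) delta (p : 'I_d -> R) lam :
  is_mech M -> diff_private 1 delta M -> (forall j, 0 <= p j <= 1) -> 0 < lam ->
  \big[Rplus/0]_(j < d) cj M p j <=
  INR n * (exp 1 * ((\big[Rplus/0]_(j < d) cond_prob_coord M p j) / (4 * lam) + lam) / 2
  + delta * INR d).
Proof.
move=> hM dp hp hl.
rewrite cj_sum G_sum -sum_const_R.
apply: sum_le => i _; exact: per_row.
Qed.

Lemma cont_prod (I : Type) (s : seq I) (P : pred I) (f : I -> R -> R) t :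
  (forall i, continuous (f i) t) ->
  continuous (fun u => \big[Rmult/1]_(i <- s | P i) f i u) t.
Proof.
move=> hf; elim: s => [|a s IH].
  apply: (continuous_ext (fun _ => 1)); last exact: continuous_const.
  by move=> u; rewrite big_nil.
case hPa: (P a).
  apply: (continuous_ext (fun u => f a u * \big[Rmult/1]_(i <- s | P i) f i u)).
    by move=> u; rewrite big_cons hPa.
  exact: continuous_mult.
apply: (continuous_ext (fun u => \big[Rmult/1]_(i <- s | P i) f i u)) => //.
by move=> u; rewrite big_cons hPa.
Qed.

Lemma is_RInt_sum (I : Type) (s : seq I) (c : I -> R) (f : I -> R -> R) a b :
  (forall z, ex_RInt (f z) a b) ->
  is_RInt (fun t => \big[Rplus/0]_(z <- s) (c z * f z t)) a b
          (\big[Rplus/0]_(z <- s) (c z * RInt (f z) a b)).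
Proof.
move=> hf; elim: s => [|z s IH].
  rewrite big_nil.
  apply: (is_RInt_ext (fun _ => 0)); first by move=> x _; rewrite big_nil.
  have := is_RInt_const a b 0; rewrite scal_zero_r; exact.
rewrite big_cons.
apply: (is_RInt_ext (fun t => plus (scal (c z) (f z t)) (\big[Rplus/0]_(z0 <- s) (c z0 * f z0 t)))).
  by move=> x _; rewrite big_cons.
apply: is_RInt_plus => //.
apply: is_RInt_scal; exact: RInt_correct.
Qed.

Lemma RInt_sum (Z : finType) (c : Z -> R) (f : Z -> R -> R) a b :
  (forall z, ex_RInt (f z) a b) ->
  RInt (fun t => \big[Rplus/0]_(z : Z) (c z * f z t)) a b =
  \big[Rplus/0]_(z : Z) (c z * RInt (f z) a b).
Proof. move=> h; apply: is_RInt_unique; exact: is_RInt_sum. Qed.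

Lemma ex_RInt_sum (Z : finType) (c : Z -> R) (f : Z -> R -> R) a b :
  (forall z, ex_RInt (f z) a b) ->
  ex_RInt (fun t => \big[Rplus/0]_(z : Z) (c z * f z t)) a b.
Proof. move=> h; eexists; exact: is_RInt_sum. Qed.

Definition cmpR (dir : bool) (a b : R) : Prop := if dir then a <= b else b <= a.

Definition updp d (p : 'I_d -> R) (l0 : 'I_d) (t : R) : 'I_d -> R :=
  fun l => if l == l0 then t else p l.

Lemma avg_gen (dir : bool) (d : nat) (Z : finType) (phi : Z -> 'I_d -> R -> R) (B : R) :
  (forall z l t, continuous (phi z l) t) ->
  (forall p : 'I_d -> R, (forall l, 0 <= p l <= 1) ->
     cmpR dir (\big[Rplus/0]_(z : Z) \big[Rmult/1]_(l < d) phi z l (p l)) B) ->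
  cmpR dir (\big[Rplus/0]_(z : Z) \big[Rmult/1]_(l < d) RInt (phi z l) 0 1) B.
Proof.
move=> hc H.
have hex : forall z l, ex_RInt (phi z l) 0 1.
  move=> z l; apply: ex_RInt_continuous => u _; exact: hc.
have key : forall m, (m <= d)%N -> forall p : 'I_d -> R, (forall l, 0 <= p l <= 1) ->
  cmpR dir (\big[Rplus/0]_(z : Z) \big[Rmult/1]_(l < d)
     (if (l < m)%N then RInt (phi z l) 0 1 else phi z l (p l))) B.
  elim=> [|m IH] hm p hp.
    move: (H p hp); congr cmpR; apply: eq_bigr => z _; by apply: eq_bigr.
  have hmd : (m < d)%N by [].
  pose l0 := Ordinal hmd.
  pose C := fun z => \big[Rmult/1]_(l < d | l != l0)
     (if (l < m)%N then RInt (phi z l) 0 1 else phi z l (p l)).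
  have eg : forall t, \big[Rplus/0]_(z : Z) \big[Rmult/1]_(l < d)
     (if (l < m)%N then RInt (phi z l) 0 1 else phi z l (updp p l0 t l)) =
     \big[Rplus/0]_(z : Z) (C z * phi z l0 t).
    move=> t; apply: eq_bigr => z _; rewrite (bigD1 l0) //= ltnn /updp eqxx Rmult_comm.
    congr (_ * _); apply: eq_bigr => l /negbTE ->; by [].
  have e2 : \big[Rplus/0]_(z : Z) \big[Rmult/1]_(l < d)
     (if (l < m.+1)%N then RInt (phi z l) 0 1 else phi z l (p l)) =
     \big[Rplus/0]_(z : Z) (C z * RInt (phi z l0) 0 1).
    apply: eq_bigr => z _; rewrite (bigD1 l0) //= ltnSn Rmult_comm.
    congr (_ * _); apply: eq_bigr => l hl; rewrite ltnS leq_eqVlt.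
    have -> : (nat_of_ord l == m) = false.
      by apply/negbTE; move: hl; apply: contra => /eqP h; apply/eqP; apply: val_inj.
    by [].
  have hI := @is_RInt_sum Z (index_enum Z) C (fun z => phi z l0) 0 1 (fun z => hex z l0).
  rewrite e2 -(is_RInt_unique _ _ _ _ hI).
  have hg : ex_RInt (fun t => \big[Rplus/0]_(z : Z) (C z * phi z l0 t)) 0 1 by eexists; exact: hI.
  have hbox : forall t, 0 < t < 1 -> forall l, 0 <= updp p l0 t l <= 1.
    move=> t ht l; rewrite /updp; case: (l == l0); [lra| exact: hp].
  have hB : RInt (fun _ => B) 0 1 = B by rewrite RInt_const /scal /= /mult /=; ring.
  rewrite -[X in cmpR _ _ X]hB /cmpR.
  case: dir H IH => H IH; apply: RInt_le => //; try lra; try exact: ex_RInt_const;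
    move=> t ht; rewrite -eg; have := IH (ltnW hm) _ (hbox t ht); by [].
move: (key d (leqnn d) (fun _ => 0) (fun _ => conj (Rle_refl 0) Rle_0_1)).
congr cmpR; apply: eq_bigr => z _; apply: eq_bigr => l _; by rewrite ltn_ord.
Qed.
Lemma der_A k m t : is_derive (fun t => t ^ (S k) * (1 - t) ^ (S m)) t
  (t ^ k * (1 - t) ^ m * ((INR k - INR (k + m) * t) + (1 - 2 * t))).
Proof.
auto_derive => //.
change (match k with 0%N => 1 | _.+1 => INR k + 1 end) with (INR (S k)).
change (match m with 0%N => 1 | _.+1 => INR m + 1 end) with (INR (S m)).
rewrite plus_INR !S_INR. replace (1 + - t) with (1 - t) by ring. ring.
Qed.
Lemma ftc_term k m : RInt (fun t => t^k*(1-t)^m*(INR k - INR (k+m)*t)) 0 1 =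
  RInt (fun t => t^k*(1-t)^m*(2*t-1)) 0 1.
Proof.
have h1 : is_RInt (fun t => t ^ k * (1 - t) ^ m * ((INR k - INR (k + m) * t) + (1 - 2 * t))) 0 1
   (minus ((fun t => t ^ (S k) * (1 - t) ^ (S m)) 1) ((fun t => t ^ (S k) * (1 - t) ^ (S m)) 0)).
  apply: (is_RInt_derive (fun t => t ^ (S k) * (1 - t) ^ (S m))) => x _; first exact: der_A.
  apply: ex_derive_continuous; auto_derive; done.
have hg : ex_RInt (fun t => t^k*(1-t)^m*(2*t-1)) 0 1.
  apply: ex_RInt_continuous => z _; apply: ex_derive_continuous; auto_derive; done.
have h3 := is_RInt_plus _ _ _ _ _ _ h1 (RInt_correct _ _ _ hg).
have h4 : is_RInt (fun t => t^k*(1-t)^m*(INR k - INR (k+m)*t)) 0 1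
   (plus (minus ((fun t => t ^ (S k) * (1 - t) ^ (S m)) 1) ((fun t => t ^ (S k) * (1 - t) ^ (S m)) 0))
         (RInt (fun t => t^k*(1-t)^m*(2*t-1)) 0 1)).
  eapply is_RInt_ext; last exact: h3. move=> x _ /=.
  rewrite /plus /=; ring.
rewrite (is_RInt_unique _ _ _ _ h4) /minus /plus /opp /=; ring.
Qed.

Lemma cont_sum (I : Type) (s : seq I) (P : pred I) (f : I -> R -> R) t :
  (forall i, continuous (f i) t) ->
  continuous (fun u => \big[Rplus/0]_(i <- s | P i) f i u) t.
Proof.
move=> hf; elim: s => [|a s IH].
  apply: (continuous_ext (fun _ => 0)); last exact: continuous_const.
  by move=> u; rewrite big_nil.
case hPa: (P a).
  apply: (continuous_ext (fun u => plus (f a u) (\big[Rplus/0]_(i <- s | P i) f i u))).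
    by move=> u; rewrite big_cons hPa.
  exact: continuous_plus.
apply: (continuous_ext (fun u => \big[Rplus/0]_(i <- s | P i) f i u)) => //.
by move=> u; rewrite big_cons hPa.
Qed.

Definition colw n d (x : dataset n d) (l : 'I_d) (t : R) : R :=
  \big[Rmult/1]_(i < n) (if x i l then t else 1 - t).

Lemma colw_cont n d (x : dataset n d) l t : continuous (colw x l) t.
Proof.
apply: cont_prod => i; case: (x i l).
  exact: continuous_id.
apply: (continuous_ext (fun u => minus 1 u)) => //.
apply: continuous_minus; [exact: continuous_const| exact: continuous_id].
Qed.

Lemma colw_ge0 n d (x : dataset n d) l t : 0 <= t <= 1 -> 0 <= colw x l t.
Proof. move=> ht; apply: prod_ge0 => i _; case: (x i l); lra. Qed.

Lemma bern_col n d (p : 'I_d -> R) (x : dataset n d) :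
  bern_weight p x = \big[Rmult/1]_(l < d) colw x l (p l).
Proof. by rewrite /bern_weight /colw exchange_big. Qed.

Lemma prod_seq (s : seq bool) t :
  \big[Rmult/1]_(c <- s) (if c then t else 1 - t) = t ^ (count id s) * (1 - t) ^ (size s - count id s).
Proof.
elim: s => [|c s IH]; first by rewrite big_nil /=; ring.
rewrite big_cons IH /=; case: c => /=.
  rewrite ?add1n ?subSS /= ?add0n; ring.
rewrite ?add0n subSn ?count_size //= ; ring.
Qed.

Lemma sum_seq (s : seq bool) :
  \big[Rplus/0]_(c <- s) b2R c = INR (count id s).
Proof.
elim: s => [|c s IH]; first by rewrite big_nil.
rewrite big_cons IH; case: c.
  have -> : count id (true :: s) = (count id s).+1 by [].
  rewrite S_INR /b2R; ring.
have -> : count id (false :: s) = count id s by [].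
rewrite /b2R; ring.
Qed.

Definition cntN n d (x : dataset n d) (j : 'I_d) : nat :=
  count id [seq x i j | i <- index_enum 'I_n].

Lemma size_cnt n d (x : dataset n d) j : size [seq x i j | i <- index_enum 'I_n] = n.
Proof. by rewrite size_map [index_enum _]unlock -enumT size_enum_ord. Qed.

Lemma colw_closed n d (x : dataset n d) j t :
  colw x j t = t ^ (cntN x j) * (1 - t) ^ (n - cntN x j).
Proof.
rewrite /colw /cntN -(big_map (fun i => x i j) xpredT (fun c => if c then t else 1 - t)).
by rewrite prod_seq size_cnt.
Qed.

Lemma cnt_closed n d (x : dataset n d) j :
  \big[Rplus/0]_(i < n) b2R (x i j) = INR (cntN x j).
Proof.
rewrite /cntN -(big_map (fun i => x i j) xpredT b2R).
by rewrite sum_seq.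
Qed.

Lemma cntN_le n d (x : dataset n d) j : (cntN x j <= n)%N.
Proof. by rewrite -{2}(size_cnt x j) count_size. Qed.

Lemma ftc_colw n d (x : dataset n d) j :
  RInt (fun t => colw x j t * (INR (cntN x j) - INR n * t)) 0 1 =
  RInt (fun t => colw x j t * (2 * t - 1)) 0 1.
Proof.
have e := ftc_term (cntN x j) (n - cntN x j).
rewrite subnKC ?cntN_le // in e.
rewrite (RInt_ext _ (fun t => t ^ cntN x j * (1 - t) ^ (n - cntN x j) * (INR (cntN x j) - INR n * t))).
  rewrite e; apply: RInt_ext => t _; by rewrite colw_closed.
by move=> t _; rewrite colw_closed.
Qed.

Lemma RInt_lin c a b : RInt (fun t => c * (2 * t - 1)) a b = c * ((b * b - b) - (a * a - a)).
Proof.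
have h : is_RInt (fun t => c * (2 * t - 1)) a b
   (minus ((fun t => c * (t * t - t)) b) ((fun t => c * (t * t - t)) a)).
  apply: (is_RInt_derive (fun t => c * (t * t - t))) => x _.
    auto_derive => //; ring.
  apply: ex_derive_continuous; auto_derive; done.
rewrite (is_RInt_unique _ _ _ _ h) /minus /plus /opp /=; ring.
Qed.

Lemma RInt_mono (f g : R -> R) a b : a <= b -> (forall t, continuous f t) -> (forall t, continuous g t) ->
  (forall t, a < t < b -> f t <= g t) -> RInt f a b <= RInt g a b.
Proof.
move=> hab hf hg h; apply: RInt_le => //; apply: ex_RInt_continuous => z _; by [apply: hf|apply: hg].
Qed.

Lemma RInt_split (f : R -> R) a b c : (forall t, continuous f t) ->
  RInt f a c = RInt f a b + RInt f b c.
Proof.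
move=> hf; rewrite -(RInt_Chasles _ a b c) //; apply: ex_RInt_continuous => z _; exact: hf.
Qed.

Lemma oneD (u : R -> R) eps :
  (forall t, continuous u t) -> (forall t, 0 <= t <= 1 -> 0 <= u t <= 1) ->
  (forall t, 0 <= t <= 11/16 -> u t <= eps) -> (forall t, 7/8 <= t <= 1 -> 15/16 <= u t) ->
  105/1024 - eps/4 <= RInt (fun t => u t * (2 * t - 1)) 0 1 /\
  RInt u 0 1 <= 11/16 * eps + 5/16.
Proof.
move=> hc hu h1 h2.
have hcv : forall t, continuous (fun t => u t * (2 * t - 1)) t.
  move=> t; apply: continuous_mult => //; apply: ex_derive_continuous; auto_derive; done.
have cc : forall c t : R, continuous (fun _ : R => c) t by move=> c t; exact: continuous_const.
have cl : forall c t, continuous (fun t => c * (2 * t - 1)) t.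
  move=> c t; apply: ex_derive_continuous; auto_derive; done.
split.
  rewrite (RInt_split 0 (1/2) 1) // (RInt_split (1/2) (7/8) 1) //.
  have a1 : RInt (fun t => eps * (2 * t - 1)) 0 (1/2) <= RInt (fun t => u t * (2 * t - 1)) 0 (1/2).
    apply: RInt_mono => //; first lra.
    move=> t ht; have := h1 t ltac:(lra); have := hu t ltac:(lra); nra.
  have a2 : RInt (fun _ => 0) (1/2) (7/8) <= RInt (fun t => u t * (2 * t - 1)) (1/2) (7/8).
    apply: RInt_mono => //; first lra.
    move=> t ht; have := hu t ltac:(lra); nra.
  have a3 : RInt (fun t => 15/16 * (2 * t - 1)) (7/8) 1 <= RInt (fun t => u t * (2 * t - 1)) (7/8) 1.
    apply: RInt_mono => //; first lra.
    move=> t ht; have := h2 t ltac:(lra); nra.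
  rewrite !RInt_lin RInt_const /scal /= /mult /= in a1 a2 a3.
  lra.
rewrite (RInt_split 0 (11/16) 1) //.
have a1 : RInt u 0 (11/16) <= RInt (fun _ => eps) 0 (11/16).
  apply: RInt_mono => //; first lra.
  move=> t ht; apply: h1; lra.
have a2 : RInt u (11/16) 1 <= RInt (fun _ => 1) (11/16) 1.
  apply: RInt_mono => //; first lra.
  move=> t ht; have := hu t ltac:(lra); lra.
rewrite !RInt_const /scal /= /mult /= in a1 a2.
lra.
Qed.
Lemma ln_le_2sqrt r : 1 <= r -> ln r <= 2 * sqrt r.
Proof.
move=> hr.
have hs : 0 < sqrt r by apply: sqrt_lt_R0; lra.
have e1 : ln r = 2 * ln (sqrt r).
  rewrite -{1}(sqrt_sqrt r); last lra.
  rewrite ln_mult //; ring.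
have : 1 + ln (sqrt r) <= exp (ln (sqrt r)) by apply: exp_ineq1_le.
rewrite exp_ln //. lra.
Qed.

Lemma final_arith (n d k e : R) : 2 <= k -> 16 * k <= d -> 0 <= n -> 0 < e <= 3 ->
  d * (105/1024 - k/(16*d)/4 - (n*e/(8*sqrt d)) * (11/16*(k/(16*d)) + 5/16)) <= n*e*sqrt d/2 + 1/8 ->
  1/16 * sqrt k * ln (d/(16*k)) <= n.
Proof.
move=> hk hd hn he H.
have hd0 : 32 <= d by lra.
have hs : 0 < sqrt d by apply: sqrt_lt_R0; lra.
have hss : sqrt d * sqrt d = d by apply: sqrt_sqrt; lra.
have heps : k / (16 * d) <= 1/256.
  apply: (Rmult_le_reg_r (16 * d)); first lra.
  field_simplify; lra.
have heps0 : 0 <= k / (16 * d) by apply: Rmult_le_pos; [lra| apply: Rlt_le; apply: Rinv_0_lt_compat; lra].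
set eps := k / (16 * d) in H heps heps0.
have hde : d * eps = k / 16 by rewrite /eps; field; lra.
have hdc : d * (n * e / (8 * sqrt d)) = n * e * sqrt d / 8.
  rewrite -{1}hss; field; lra.
have H2 : 105 / 1024 * d - k / 64 - n * e * sqrt d / 8 * (11/16 * eps + 5/16) <= n * e * sqrt d / 2 + 1/8.
  have : d * (105/1024 - eps/4 - (n*e/(8*sqrt d)) * (11/16*eps + 5/16)) =
     105 / 1024 * d - (d * eps) / 4 - d * (n * e / (8 * sqrt d)) * (11/16 * eps + 5/16) by rewrite /Rdiv; ring.
  rewrite hde hdc. lra.
have hnes : 0 <= n * e * sqrt d by apply: Rmult_le_pos; [apply: Rmult_le_pos; lra| lra].
have H3 : n * e * sqrt d / 8 * (11/16 * eps + 5/16) <= n * e * sqrt d / 24.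
  have : 11/16 * eps + 5/16 <= 1/3 by lra.
  move=> h; have := Rmult_le_compat_l _ _ _ hnes h. lra.
have H4 : 100/1024 * d <= 13/8 * (n * sqrt d).
  have : n * e * sqrt d <= 3 * (n * sqrt d).
    have hns : 0 <= n * sqrt d by apply: Rmult_le_pos; lra.
    have : n * e * sqrt d = e * (n * sqrt d) by ring.
    move=> ->; apply: Rmult_le_compat_r; lra.
  lra.
have H5 : sqrt d / 32 <= n.
  apply: (Rmult_le_reg_r (sqrt d)) => //.
  have : sqrt d / 32 * sqrt d = d / 32 by rewrite -[in RHS]hss /Rdiv; ring.
  move=> ->. lra.
have hk0 : 0 < sqrt k by apply: sqrt_lt_R0; lra.
set r := d / (16 * k).
have hr : 1 <= r.
  rewrite /r; apply: (Rmult_le_reg_r (16 * k)); first lra.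
  field_simplify; lra.
have hsd : sqrt d = 4 * (sqrt k * sqrt r).
  have : d = 16 * (k * r) by rewrite /r; field; lra.
  have h16 : sqrt 16 = 4 by replace 16 with (4 * 4) by ring; apply: sqrt_square; lra.
  have hkr : 0 <= k * r by apply: Rmult_le_pos; lra.
  move=> ->; rewrite (sqrt_mult 16 (k * r)) ?(sqrt_mult k r) ?h16; lra.
have hl := @ln_le_2sqrt r hr.
have : 1/16 * sqrt k * ln r <= 1/16 * sqrt k * (2 * sqrt r).
  apply: Rmult_le_compat_l => //; lra.
lra.
Qed.

Lemma pout_bounds n d (M : mech n d) x (S : pred (row d)) :
  is_mech M -> 0 <= prob_out M x S <= 1.
Proof.
move=> hM; have [h0 h1] := hM x; split.
  by apply: sum_ge0 => o _; apply: h0.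
rewrite /prob_out big_mkcond /= -h1; apply: sum_le => o _.
case: (S o) => //=; try lra; exact: h0.
Qed.

Lemma cpc_bounds n d (M : mech n d) (p : 'I_d -> R) j :
  is_mech M -> (forall l, 0 <= p l <= 1) -> 0 <= cond_prob_coord M p j <= 1.
Proof.
move=> hM hp; rewrite /cond_prob_coord; split.
  apply: sum_ge0 => x _; apply: Rmult_le_pos; first exact: bern_ge0.
  exact: (proj1 (pout_bounds _ _ hM)).
rewrite -(sum_bern n p); apply: sum_le => x _.
have := bern_ge0 x hp; have := pout_bounds x (fun o : row d => o j) hM.
move=> [h1 h2] h3; have := Rmult_le_compat_l _ _ _ h3 h2. lra.
Qed.

Lemma bern_split n d (p : 'I_d -> R) (x : dataset n d) j :
  bern_weight p x = colw x j (p j) * \big[Rmult/1]_(l < d | l != j) colw x l (p l).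
Proof. by rewrite bern_col (bigD1 j). Qed.

Lemma prod_upd n d (p : 'I_d -> R) (x : dataset n d) j t :
  \big[Rmult/1]_(l < d | l != j) colw x l (updp p j t l) =
  \big[Rmult/1]_(l < d | l != j) colw x l (p l).
Proof. apply: eq_bigr => l /negbTE hl; by rewrite /updp hl. Qed.

Lemma cnt_sum n d (p : 'I_d -> R) (x : dataset n d) j :
  \big[Rplus/0]_(i < n) (b2R (x i j) - p j) = INR (cntN x j) - INR n * p j.
Proof. by rewrite sum_minus cnt_closed sum_const_R. Qed.

Definition pjx n d (M : mech n d) (x : dataset n d) (j : 'I_d) : R :=
  prob_out M x (fun o : row d => o j).

Definition phiH n d (M : mech n d) (cc : R) (z : 'I_d * dataset n d) (l : 'I_d) : R -> R :=
  if l == z.1 then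
    (fun t => colw z.2 z.1 t * (pjx M z.2 z.1 * (INR (cntN z.2 z.1) - INR n * t) - cc * pjx M z.2 z.1))
  else colw z.2 l.

Lemma phiH_cont n d (M : mech n d) cc z l t : continuous (phiH M cc z l) t.
Proof.
rewrite /phiH; case: (l == z.1); last exact: colw_cont.
apply: continuous_mult; first exact: colw_cont.
apply: ex_derive_continuous; auto_derive; done.
Qed.

Lemma H1 n d (M : mech n d) cc (p : 'I_d -> R) :
  \big[Rplus/0]_(z : 'I_d * dataset n d) \big[Rmult/1]_(l < d) phiH M cc z l (p l) =
  \big[Rplus/0]_(j < d) (cj M p j - cc * cond_prob_coord M p j).
Proof.
symmetry.
transitivity (\big[Rplus/0]_(j < d) \big[Rplus/0]_(x : dataset n d)
   \big[Rmult/1]_(l < d) phiH M cc (j, x) l (p l)); last first.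
  by rewrite pair_bigA; apply: eq_bigr => -[j x] _.
apply: eq_bigr => j _.
rewrite /cj /cond_prob_coord -sum_scal -sum_minus; apply: eq_bigr => x _.
rewrite (bigD1 j) //= /phiH /= eqxx.
rewrite (eq_bigr (fun l => colw x l (p l))); last first.
  by move=> l /negbTE ->.
rewrite cnt_sum (bern_split p x j) -/(pjx M x j).
set A := \big[Rmult/1]_(l < d | l != j) colw x l (p l).
ring.
Qed.

Lemma RInt_c01 (c : R) : RInt (fun _ : R => c) 0 1 = c.
Proof. rewrite RInt_const /scal /= /mult /=; ring. Qed.

Lemma RInt_extR (f g : R -> R) a b : (forall x, f x = g x) -> RInt f a b = RInt g a b.
Proof. move=> h; apply: RInt_ext => x _; exact: h. Qed.

Lemma RInt_scalR (f : R -> R) a b c : ex_RInt f a b ->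
  RInt (fun t => c * f t) a b = c * RInt f a b.
Proof. move=> h; exact: (RInt_scal f a b c h). Qed.

Lemma RInt_plusR (f g : R -> R) a b : ex_RInt f a b -> ex_RInt g a b ->
  RInt (fun t => f t + g t) a b = RInt f a b + RInt g a b.
Proof. move=> h1 h2; exact: (RInt_plus f g a b h1 h2). Qed.

Lemma u_eq n d (M : mech n d) (p : 'I_d -> R) j t :
  cond_prob_coord M (updp p j t) j =
  \big[Rplus/0]_(x : dataset n d)
    ((\big[Rmult/1]_(l < d | l != j) colw x l (p l) * pjx M x j) * colw x j t).
Proof.
rewrite /cond_prob_coord; apply: eq_bigr => x _.
rewrite (bern_split _ x j) prod_upd /updp eqxx -/(pjx M x j).
set A := \big[Rmult/1]_(l < d | l != j) colw x l (p l); ring.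
Qed.

Lemma colw_exRInt n d (x : dataset n d) l (g : R -> R) a b : (forall t, continuous g t) ->
  ex_RInt (fun t => colw x l t * g t) a b.
Proof.
move=> hg; apply: ex_RInt_continuous => z _; apply: continuous_mult; [exact: colw_cont| exact: hg].
Qed.

Lemma H2 n d (M : mech n d) cc eps (j : 'I_d) :
  is_mech M -> 0 <= cc ->
  (forall p : 'I_d -> R, (forall l, 0 <= p l <= 1) ->
     (p j <= 11/16 -> cond_prob_coord M p j <= eps) /\
     (7/8 <= p j -> 15/16 <= cond_prob_coord M p j)) ->
  105/1024 - eps/4 - cc * (11/16 * eps + 5/16) <=
  \big[Rplus/0]_(x : dataset n d) \big[Rmult/1]_(l < d) RInt (phiH M cc (j, x) l) 0 1.
Proof.
move=> hM hcc hacc.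
pose psi := fun (x : dataset n d) (l : 'I_d) =>
  if l == j then (fun _ : R => RInt (phiH M cc (j, x) j) 0 1) else colw x l.
have e : \big[Rplus/0]_(x : dataset n d) \big[Rmult/1]_(l < d) RInt (phiH M cc (j, x) l) 0 1 =
         \big[Rplus/0]_(x : dataset n d) \big[Rmult/1]_(l < d) RInt (psi x l) 0 1.
  apply: eq_bigr => x _; apply: eq_bigr => l _.
  case: (eqVneq l j) => [->|hl]; first by rewrite /psi eqxx RInt_c01.
  by rewrite /psi /phiH /= (negbTE hl).
rewrite e.
have := @avg_gen false d (dataset n d) psi (105/1024 - eps/4 - cc * (11/16 * eps + 5/16)).
rewrite /cmpR; apply.
  move=> x l t; rewrite /psi; case: (l == j); [exact: continuous_const| exact: colw_cont].
move=> p hp.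
pose A := fun x : dataset n d => \big[Rmult/1]_(l < d | l != j) colw x l (p l) * pjx M x j.
pose u := fun t => \big[Rplus/0]_(x : dataset n d) (A x * colw x j t).
have hA : forall x, 0 <= A x.
  move=> x; apply: Rmult_le_pos.
    apply: prod_ge0 => l _; apply: colw_ge0; exact: hp.
  exact: (proj1 (pout_bounds _ _ hM)).
have hsum : \big[Rplus/0]_(x : dataset n d) \big[Rmult/1]_(l < d) psi x l (p l) =
   \big[Rplus/0]_(x : dataset n d) (A x * (RInt (fun t => colw x j t * (2 * t - 1)) 0 1 -
        cc * RInt (colw x j) 0 1)).
  apply: eq_bigr => x _; rewrite (bigD1 j) //= /psi eqxx.
  rewrite (eq_bigr (fun l => colw x l (p l))); last by move=> l /negbTE ->.
  rewrite /phiH /= eqxx.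
  rewrite (@RInt_extR _ (fun t => pjx M x j * (colw x j t * (INR (cntN x j) - INR n * t)) +
                                 (- (cc * pjx M x j)) * colw x j t)); last first.
    by move=> t; ring.
  have ex0 : ex_RInt (fun t => colw x j t * (INR (cntN x j) - INR n * t)) 0 1.
    apply: colw_exRInt => t; apply: ex_derive_continuous; auto_derive; done.
  have exc : ex_RInt (colw x j) 0 1.
    apply: ex_RInt_continuous => z _; exact: colw_cont.
  have ex1 : ex_RInt (fun t => pjx M x j * (colw x j t * (INR (cntN x j) - INR n * t))) 0 1.
    exact: (ex_RInt_scal _ _ _ (pjx M x j) ex0).
  have ex2 : ex_RInt (fun t => (- (cc * pjx M x j)) * colw x j t) 0 1.
    exact: (ex_RInt_scal _ _ _ _ exc).
  rewrite (RInt_plusR ex1 ex2) (RInt_scalR _ ex0) (RInt_scalR _ exc) ftc_colw /A.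
  set C := \big[Rmult/1]_(l < d | l != j) colw x l (p l).
  ring.
rewrite hsum.
have hu : forall t, u t = cond_prob_coord M (updp p j t) j.
  by move=> t; rewrite u_eq.
have hcu : forall t, continuous u t.
  move=> t; apply: cont_sum => x; apply: (continuous_ext (fun t => scal (A x) (colw x j t))) => //.
  apply: continuous_scal_r; exact: colw_cont.
have hbox : forall t, 0 <= t <= 1 -> forall l, 0 <= updp p j t l <= 1.
  move=> t ht l; rewrite /updp; case: (l == j) => //; exact: hp.
have [o1 o2] : 105/1024 - eps/4 <= RInt (fun t => u t * (2 * t - 1)) 0 1 /\
         RInt u 0 1 <= 11/16 * eps + 5/16.
  apply: oneD => //.
  - move=> t ht; rewrite hu; apply: cpc_bounds => //; exact: hbox.
  - move=> t ht; rewrite hu; apply: (proj1 (hacc _ (hbox t ltac:(lra)))).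
    rewrite /updp eqxx; lra.
  - move=> t ht; rewrite hu; apply: (proj2 (hacc _ (hbox t ltac:(lra)))).
    rewrite /updp eqxx; lra.
have r1 : RInt (fun t => u t * (2 * t - 1)) 0 1 =
   \big[Rplus/0]_(x : dataset n d) (A x * RInt (fun t => colw x j t * (2 * t - 1)) 0 1).
  rewrite -RInt_sum; last by move=> x; apply: colw_exRInt => t;
    apply: ex_derive_continuous; auto_derive; done.
  apply: RInt_ext => t _; rewrite /u big_distrl /=; apply: eq_bigr => x _; ring.
have r2 : RInt u 0 1 = \big[Rplus/0]_(x : dataset n d) (A x * RInt (colw x j) 0 1).
  rewrite -RInt_sum //; move=> x; apply: ex_RInt_continuous => z _; exact: colw_cont.
have r3 : \big[Rplus/0]_(x : dataset n d) (A x * (RInt (fun t => colw x j t * (2 * t - 1)) 0 1 -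
        cc * RInt (colw x j) 0 1)) = RInt (fun t => u t * (2 * t - 1)) 0 1 - cc * RInt u 0 1.
  rewrite r1 r2 -sum_scal -sum_minus; apply: eq_bigr => x _; ring.
rewrite r3.
have : cc * RInt u 0 1 <= cc * (11/16 * eps + 5/16) by apply: Rmult_le_compat_l.
lra.
Qed.

Unset Implicit Arguments.
Theorem corollary4p3 (n d k : nat) :
  (32 <= 16 * k)%N -> (16 * k <= d)%N ->
  forall M : mech n d,
    is_mech M ->
    diff_private 1 (/ (8 * INR n * INR d)) M ->
    (forall p : 'I_d -> R,
       (forall j, 0 <= p j <= 1) ->
       forall j : 'I_d,
         (p j <= 7 / 8 - 3 / 16 -> cond_prob_coord M p j <= INR k / (16 * INR d)) /\
         (7 / 8 <= p j -> 1 - 1 / 16 <= cond_prob_coord M p j)) ->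
    1 / 16 * sqrt (INR k) * ln (INR d / (16 * INR k)) <= INR n.
Proof.
move=> hk hd M hM dp hacc.
have hk2 : (2 <= k)%N by rewrite -(leq_pmul2l (isT : (0 < 16)%N)); exact: hk.
have hkR : 2 <= INR k by apply: (le_INR 2 k); apply/leP.
have hdR : 16 * INR k <= INR d.
  have := le_INR (16 * k) d (elimT leP hd); rewrite mult_INR /=; lra.
have hd0 : 0 < INR d by lra.
set lam := sqrt (INR d).
have hlam : 0 < lam by apply: sqrt_lt_R0.
set delta := / (8 * INR n * INR d).
set cc := INR n * exp 1 / (8 * lam).
set eps := INR k / (16 * INR d).
have he : 0 < exp 1 <= 3 by split; [apply: exp_pos| apply: exp_le_3].
have hn0 : 0 <= INR n by apply: pos_INR.
have hcc : 0 <= cc.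
  rewrite /cc /Rdiv; apply: Rmult_le_pos; [apply: Rmult_le_pos; lra|].
  apply: Rlt_le; apply: Rinv_0_lt_compat; lra.
set B := INR n * exp 1 * lam / 2 + INR n * delta * INR d.
have Avg : \big[Rplus/0]_(z : 'I_d * dataset n d) \big[Rmult/1]_(l < d) RInt (phiH M cc z l) 0 1 <= B.
  have := @avg_gen true d _ (phiH M cc) B; rewrite /cmpR; apply.
    move=> z l t; exact: phiH_cont.
  move=> p hp; rewrite H1 sum_minus sum_scal G_sum.
  have := dp_bound hM dp hp hlam; rewrite G_sum.
  set G := \big[Rplus/0]_(x : dataset n d)
     (bern_weight p x * \big[Rplus/0]_(o : row d) (M x o * \big[Rplus/0]_(j < d) b2R (o j))).
  set S := \big[Rplus/0]_(j < d) cj M p j.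
  have -> : INR n * (exp 1 * (G / (4 * lam) + lam) / 2 + delta * INR d) = cc * G + B.
    rewrite /cc /B; field; lra.
  lra.
have Low : INR d * (105/1024 - eps/4 - cc * (11/16 * eps + 5/16)) <=
   \big[Rplus/0]_(z : 'I_d * dataset n d) \big[Rmult/1]_(l < d) RInt (phiH M cc z l) 0 1.
  have -> : \big[Rplus/0]_(z : 'I_d * dataset n d) \big[Rmult/1]_(l < d) RInt (phiH M cc z l) 0 1 =
     \big[Rplus/0]_(j < d) \big[Rplus/0]_(x : dataset n d) \big[Rmult/1]_(l < d) RInt (phiH M cc (j, x) l) 0 1.
    by rewrite pair_bigA; apply: eq_bigr => -[j x] _.
  rewrite -sum_const_R; apply: sum_le => j _.
  apply: H2 => // p hp; have [a1 a2] := hacc p hp j; split.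
    move=> h; apply: a1; lra.
  move=> h; have := a2 h; lra.
have hB : B <= INR n * exp 1 * sqrt (INR d) / 2 + 1/8.
  rewrite /B /lam.
  have : INR n * delta * INR d <= 1/8.
    case: (eqVneq n 0%N) => [->|hn]; first by rewrite /= !Rmult_0_l; lra.
    have hnp : 0 < INR n by apply: lt_0_INR; apply/ltP; rewrite lt0n.
    rewrite /delta; apply: Req_le; field; lra.
  lra.
apply: (@final_arith (INR n) (INR d) (INR k) (exp 1)) => //.
move: Low Avg hB; rewrite /cc /eps /lam; lra.
Qed.
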